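(* Let $k$ be a field, $n\ge1$, and let $Q_H$ be the quiver with vertices $x_1,\ldots,x_{n+1},y_1,\ldots,y_n$ and arrows $r_i:x_i\to y_i$, $l_i:y_i\to x_{i+1}$, $a_i:x_i\to x_{i+1}$ ($i=1,\ldots,n$); put $A_i=r_il_i$. Let $1=c_1<c_2<\cdots<c_{s+1}=n+1$ with $n_k:=c_{k+1}-c_k\ge2$ for all $k=1,\ldots,s$. For $1\le k\le s$ and $1\le i\le n_k$ write $a^k_i=a_{c_k+i-1}$, $A^k_i=A_{c_k+i-1}$ and $W^k=a^k_1\cdots a^k_{n_k}+A^k_1\cdots A^k_{n_k}$. Let $\varphi^k_i:kQ_H\to kQ_H$ be the algebra automorphism with $\varphi^k_i(a^k_i)=a^k_i+A^k_i$ and fixing all other arrows and all stationary paths; let $\bar\gamma^k=\varphi^k_{n_k}\circ\cdots\circ\varphi^k_1$ and $\bar\gamma=\bar\gamma^s\circ\cdots\circ\bar\gamma^1$. Then for each $k$, $$\bar\gamma(W^k)=a^k_1\cdots a^k_{n_k}+\sum_{i=1}^{n_k}a^k_1\cdots a^k_{i-1}A^k_ia^k_{i+1}\cdots a^k_{n_k}+\Gamma_k,$$ where $\Gamma_k$ is a sum of terms each of which is a scalar multiple of a path containing at least two of the factors $A^k_1,\ldots,A^k_{n_k}$.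
   Context: $kQ_H$ is the path algebra of $Q_H$ over $k$; an expression like $a^k_1\cdots A^k_i\cdots a^k_{n_k}$ denotes the path obtained by concatenation. *)

(* Defs.v *)
From HB Require Import structures.
From mathcomp Require Import all_boot all_order all_algebra.
Set Implicit Arguments. Unset Strict Implicit. Unset Printing Implicit Defensive.
Import GRing.Theory.
Local Open Scope ring_scope.

Inductive vertex := X of nat | Y of nat.
Definition vertex_code (v : vertex) : bool * nat :=
  match v with X i => (false, i) | Y i => (true, i) end.
Definition vertex_decode (p : bool * nat) : vertex :=
  if p.1 then Y p.2 else X p.2.
Lemma vertex_codeK : cancel vertex_code vertex_decode. Proof. by case. Qed.
HB.instance Definition _ := Equality.copy vertex (can_type vertex_codeK).

Inductive arrow := r_ of nat | l_ of nat | a_ of nat.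
Definition arrow_code (e : arrow) : nat * nat :=
  match e with r_ i => (0, i) | l_ i => (1, i) | a_ i => (2, i) end%N.
Definition arrow_decode (p : nat * nat) : arrow :=
  match p.1 with 0 => r_ p.2 | 1 => l_ p.2 | _ => a_ p.2 end%N.
Lemma arrow_codeK : cancel arrow_code arrow_decode. Proof. by case. Qed.
HB.instance Definition _ := Equality.copy arrow (can_type arrow_codeK).

Definition src (e : arrow) : vertex :=
  match e with r_ i => X i | l_ i => Y i | a_ i => X i end.
Definition tgt (e : arrow) : vertex :=
  match e with r_ i => Y i | l_ i => X i.+1 | a_ i => X i.+1 end.

(* A path: a start vertex and a (composable) list of arrows, concatenated
   left to right; the empty list gives the stationary path at the vertex. *)
Record path := Path { pstart : vertex; parrs : seq arrow }.
Definition path_code (p : path) := (pstart p, parrs p).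
Definition path_decode (q : vertex * seq arrow) := Path q.1 q.2.
Lemma path_codeK : cancel path_code path_decode. Proof. by case. Qed.
HB.instance Definition _ := Equality.copy path (can_type path_codeK).

Definition pend (p : path) : vertex := foldl (fun _ e => tgt e) (pstart p) (parrs p).
Definition pcat (p q : path) : path := Path (pstart p) (parrs p ++ parrs q).

Section PathAlgebra.
Variable K : fieldType.

Definition fsum := seq (K * path).

(* the coefficient of the path p; two formal sums denote the same element of
   kQ_H iff their coefficient functions agree *)
Definition coef (f : fsum) (p : path) : K := \sum_(t <- f | t.2 == p) t.1.

Definition fscale (c : K) (f : fsum) : fsum := [seq (c * t.1, t.2) | t <- f].

Definition fmul (f g : fsum) : fsum :=
  flatten [seq [seq (t.1 * u.1, pcat t.2 u.2) | u <- g & pend t.2 == pstart u.2]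
          | t <- f].

Definition vtx (v : vertex) : fsum := [:: (1, Path v [::])].
Definition arr (e : arrow) : fsum := [:: (1, Path (src e) [:: e])].

Definition fprod (s : seq fsum) : fsum :=
  if s is f :: s' then foldl fmul f s' else [::].

Definition subst_path (F : arrow -> fsum) (p : path) : fsum :=
  foldl (fun acc e => fmul acc (F e)) (vtx (pstart p)) (parrs p).
Definition subst (F : arrow -> fsum) (f : fsum) : fsum :=
  flatten [seq fscale t.1 (subst_path F t.2) | t <- f].

Definition AA (i : nat) : fsum := fmul (arr (r_ i)) (arr (l_ i)).

Definition phi (j : nat) : fsum -> fsum :=
  subst (fun e => if e == a_ j then arr (a_ j) ++ AA j else arr e).

Definition nk (c : nat -> nat) (k : nat) : nat := (c k.+1 - c k)%N.
Definition idx (c : nat -> nat) (k i : nat) : nat := (c k + i - 1)%N.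

Definition gammak (c : nat -> nat) (k : nat) (f : fsum) : fsum :=
  foldl (fun g i => phi (idx c k i) g) f (iota 1 (nk c k)).
Definition gamma (c : nat -> nat) (s : nat) (f : fsum) : fsum :=
  foldl (fun g k => gammak c k g) f (iota 1 s).

Definition apath (c : nat -> nat) (k : nat) : fsum :=
  fprod [seq arr (a_ (idx c k i)) | i <- iota 1 (nk c k)].
Definition Apath (c : nat -> nat) (k : nat) : fsum :=
  fprod [seq AA (idx c k i) | i <- iota 1 (nk c k)].
Definition W (c : nat -> nat) (k : nat) : fsum := apath c k ++ Apath c k.
Definition single_terms (c : nat -> nat) (k : nat) : fsum :=
  flatten [seq fprod [seq (if j == i then AA (idx c k j) else arr (a_ (idx c k j)))
                     | j <- iota 1 (nk c k)]
          | i <- iota 1 (nk c k)].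

End PathAlgebra.

Definition has_factor (c : nat -> nat) (k i : nat) (p : path) : bool :=
  infix [:: r_ (idx c k i); l_ (idx c k i)] (parrs p).

Definition two_factors (c : nat -> nat) (k : nat) (p : path) : Prop :=
  exists i1 i2 : nat, [/\ (1 <= i1)%N, (i1 < i2)%N, (i2 <= nk c k)%N,
                         has_factor c k i1 p & has_factor c k i2 p].

(* Main.v *)
Require Import Defs.
From HB Require Import structures.
From mathcomp Require Import all_boot all_order all_algebra.
From mathcomp Require Import zify.
Set Implicit Arguments. Unset Strict Implicit. Unset Printing Implicit Defensive.
Import GRing.Theory.
Local Open Scope ring_scope.

Section Sec.
Variable K : fieldType.

Definition opts (j : nat) (e : arrow) : seq (seq arrow) :=
  if e == a_ j then [:: [:: a_ j]; [:: r_ j; l_ j]] else [:: [:: e]].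
Definition stepj j (acc : seq (seq arrow)) e := [seq x ++ y | x <- acc, y <- opts j e].
Fixpoint wfw (u : vertex) (w : seq arrow) : bool :=
  if w is e :: w' then (src e == u) && wfw (tgt e) w' else true.

Definition Fj j := (fun e => if e == a_ j then arr K (a_ j) ++ AA K j else arr K e).

Lemma Fphi j e : Fj j e = [seq (1, Path (src e) y) | y <- opts j e].
Proof.
rewrite /Fj /opts; case: eqP => [->|_] //=.
by rewrite /AA /arr /fmul /= /pend /= eqxx /= mulr1.
Qed.

Lemma pend_cat v x y : pend (Path v (x ++ y)) = pend (Path (pend (Path v x)) y).
Proof. by rewrite /pend /= foldl_cat. Qed.

Lemma pend_opts j e y : y \in opts j e -> pend (Path (src e) y) = tgt e.
Proof.
rewrite /opts; case: eqP => [->|_]; rewrite !inE.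
  by case/orP => /eqP ->.
by move/eqP ->.
Qed.

Lemma fmul_step j v u acc e : src e = u ->
  (forall x, x \in acc -> pend (Path v x) = u) ->
  fmul [seq (1, Path v x) | x <- acc] (Fj j e) = [seq (1, Path v w) | w <- stepj j acc e].
Proof.
move=> He Hacc; rewrite Fphi.
elim: acc Hacc => [|x acc IH] Hacc //.
rewrite [LHS]/fmul map_cons /= -/(fmul _ _) IH; last by move=> y Hy; apply: Hacc; rewrite inE Hy orbT.
rewrite map_cat; congr (_ ++ _).
rewrite Hacc ?inE ?eqxx // -He.
elim: (opts j e) => [|y O IHO] //=.
by rewrite eqxx /= mulr1 IHO.
Qed.

Lemma subst_path_gen j v s : forall u acc, wfw u s ->
  (forall x, x \in acc -> pend (Path v x) = u) ->
  foldl (fun acc e => fmul acc (Fj j e)) [seq (1, Path v x) | x <- acc] s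
  = [seq (1, Path v w) | w <- foldl (stepj j) acc s].
Proof.
elim: s => [|e s IH] u acc //= /andP [/eqP He Hs] Hacc.
rewrite (fmul_step _ He Hacc); apply: (IH (tgt e)) => //.
move=> x /allpairsP [[y z] [/= Hy Hz ->]].
by rewrite pend_cat Hacc // -He (pend_opts Hz).
Qed.

Definition E j w := foldl (stepj j) [:: [::]] w.

Lemma phi_map j v WS : (forall w, w \in WS -> wfw v w) ->
  @phi K j [seq (1, Path v w) | w <- WS] =
  [seq (1, Path v w) | w <- flatten [seq E j w | w <- WS]].
Proof.
elim: WS => [|w WS IH] HW //=.
rewrite /phi /subst /= map_cat -IH; last by move=> x Hx; apply: HW; rewrite inE Hx orbT.
congr (_ ++ _).
rewrite /subst_path /= /vtx.
have -> : [:: (1 : K, Path v [::])] = [seq (1, Path v x) | x <- [:: [::]]] by [].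
rewrite (@subst_path_gen j v w v [:: [::]]) ?HW ?inE ?eqxx //; last by move=> x; rewrite inE => /eqP ->.
rewrite /fscale -map_comp; apply: eq_map => x /=; by rewrite mul1r.
Qed.


Lemma stepj_noa j acc e : e != a_ j -> stepj j acc e = [seq x ++ [:: e] | x <- acc].
Proof.
move=> He; rewrite /stepj /opts (negbTE He).
by elim: acc => //= x acc ->.
Qed.

Lemma foldl_noa j w : forall acc, a_ j \notin w -> foldl (stepj j) acc w = [seq x ++ w | x <- acc].
Proof.
elim: w => [|e w IH] acc /=.
  by move=> _; rewrite (eq_map (@cats0 _)) map_id.
rewrite inE negb_or => /andP [He Hw].
rewrite IH // stepj_noa; last by rewrite eq_sym.
by rewrite -map_comp; apply: eq_map => x /=; rewrite -catA.
Qed.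

Lemma E_noa j w : a_ j \notin w -> E j w = [:: w].
Proof. by move=> H; rewrite /E foldl_noa. Qed.

Lemma E_a j x y : a_ j \notin x -> a_ j \notin y ->
  E j (x ++ a_ j :: y) = [:: x ++ a_ j :: y; x ++ r_ j :: l_ j :: y].
Proof.
move=> Hx Hy; rewrite /E foldl_cat (foldl_noa [:: [::]] Hx) /= foldl_noa //.
by rewrite /stepj /opts eqxx /= -!catA.
Qed.

Fixpoint word (j0 : nat) (bs : seq bool) : seq arrow :=
  if bs is b :: bs' then (if b then [:: r_ j0; l_ j0] else [:: a_ j0]) ++ word j0.+1 bs'
  else [::].

Lemma word_cat j0 b1 b2 : word j0 (b1 ++ b2) = word j0 b1 ++ word (j0 + size b1) b2.
Proof.
elim: b1 j0 => [|b b1 IH] j0 /=; first by rewrite addn0.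
by rewrite IH -catA addSnnS.
Qed.

Definition aidx (e : arrow) := match e with r_ i => i | l_ i => i | a_ i => i end.

Lemma aidx_word e j0 bs : e \in word j0 bs -> (j0 <= aidx e < j0 + size bs)%N.
Proof.
elim: bs j0 => [|b bs IH] j0 //=.
rewrite mem_cat => /orP [He|He].
  have H : aidx e = j0.
    by case: b He; rewrite !inE ?orbF; [case/orP|]; move/eqP ->.
  by rewrite H leqnn addnS ltnS leq_addr.
have /andP [H1 H2] := IH _ He.
by rewrite (ltnW H1) addnS -addSn.
Qed.

Lemma a_notin_word j j0 bs : ((j < j0) || (j0 + size bs <= j))%N -> a_ j \notin word j0 bs.
Proof.
move=> H; apply/negP => /aidx_word /= /andP [H1 H2].
case/orP: H => H.
  by move: (leq_trans H H1); rewrite ltnn.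
by move: (leq_trans H2 H); rewrite ltnn.
Qed.

Lemma a_notin_true j j0 m : a_ j \notin word j0 (nseq m true).
Proof. by elim: m j0 => [|m IH] j0 //=; rewrite !inE /= IH. Qed.

Lemma wfw_word j0 bs : wfw (X j0) (word j0 bs).
Proof. by elim: bs j0 => [|b bs IH] j0 //=; case: b; rewrite /= !eqxx /= IH. Qed.

Fixpoint allbits (m : nat) : seq (seq bool) :=
  if m is m'.+1 then flatten [seq [:: rcons b false; rcons b true] | b <- allbits m']
  else [:: [::]].

Lemma size_allbits m b : b \in allbits m -> size b = m.
Proof.
elim: m b => [|m IH] b /=; first by rewrite inE => /eqP ->.
case/flatten_mapP => b' Hb'; rewrite !inE => /orP [] /eqP ->;
  by rewrite size_rcons IH.
Qed.

Definition St (N m : nat) := [seq b ++ nseq (N - m) false | b <- allbits m] ++ [:: nseq N true].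

Lemma size_St N m b : (m <= N)%N -> b \in St N m -> size b = N.
Proof.
move=> HmN; rewrite mem_cat inE => /orP [/mapP [b' Hb' ->]|/eqP ->].
  by rewrite size_cat size_nseq (size_allbits Hb') subnKC.
by rewrite size_nseq.
Qed.

Lemma step_in N j0 m : (m < N)%N ->
  flatten [seq E (j0 + m) w | w <- map (word j0) (St N m)] = map (word j0) (St N m.+1).
Proof.
move=> HmN; rewrite /St !map_cat flatten_cat /=.
rewrite E_noa ?a_notin_true //; congr (_ ++ _).
rewrite -!map_comp map_flatten -map_comp; congr flatten.
have -> : (N - m = (N - m.+1).+1)%N by rewrite subnSK.
apply/eq_in_map => b Hb /=.
rewrite word_cat (size_allbits Hb) /=.
rewrite E_a; first by rewrite -!cats1 -!catA /= !(word_cat j0 b) (size_allbits Hb) /=.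
  by apply: a_notin_word; rewrite (size_allbits Hb) leqnn orbT.
by apply: a_notin_word; rewrite ltnSn.
Qed.

Definition Ts j0 (L : seq (seq bool)) := [seq ((1 : K), Path (X j0) (word j0 b)) | b <- L].

Lemma TsE j0 L : Ts j0 L = [seq ((1 : K), Path (X j0) w) | w <- map (word j0) L].
Proof. by rewrite /Ts -map_comp. Qed.

Lemma wf_map j0 L w : w \in map (word j0) L -> wfw (X j0) w.
Proof. by case/mapP => b _ ->; apply: wfw_word. Qed.

Lemma phi_in N j0 m : (m < N)%N -> @phi K (j0 + m) (Ts j0 (St N m)) = Ts j0 (St N m.+1).
Proof.
by move=> H; rewrite !TsE phi_map; [rewrite step_in | apply: wf_map].
Qed.

Lemma phi_out N j0 m j : (m <= N)%N -> ((j < j0) || (j0 + N <= j))%N ->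
  @phi K j (Ts j0 (St N m)) = Ts j0 (St N m).
Proof.
move=> HmN Hj; rewrite !TsE phi_map; last by apply: wf_map.
congr map; rewrite -map_comp.
have -> : [seq (E j \o word j0) i | i <- St N m] = [seq [:: word j0 b] | b <- St N m].
  apply/eq_in_map => b Hb /=.
  by rewrite E_noa // a_notin_word // (size_St HmN Hb).
by rewrite flatten_map1.
Qed.

Lemma gammak_gen c k r : forall m, (r + m = nk c k)%N ->
  foldl (fun g i => @phi K (idx c k i) g) (Ts (c k) (St (nk c k) m)) (iota m.+1 r)
  = Ts (c k) (St (nk c k) (nk c k)).
Proof.
elim: r => [|r IH] m Hrm /=; first by rewrite -Hrm.
have -> : idx c k m.+1 = (c k + m)%N by rewrite /idx addnS subn1.
rewrite phi_in; last by rewrite -Hrm addSn ltnS leq_addl.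
by apply: IH; rewrite addnS -addSn.
Qed.

Lemma gammak_block c k :
  gammak c k (Ts (c k) (St (nk c k) 0)) = Ts (c k) (St (nk c k) (nk c k)).
Proof. by rewrite /gammak gammak_gen // addn0. Qed.

Lemma fold_out (h : nat -> nat) l N j0 m : (m <= N)%N ->
  (forall i, i \in l -> ((h i < j0) || (j0 + N <= h i))%N) ->
  foldl (fun g i => @phi K (h i) g) (Ts j0 (St N m)) l = Ts j0 (St N m).
Proof.
move=> HmN; elim: l => [|i l IH] //= Hl.
rewrite phi_out //; first by apply: IH => i' Hi'; apply: Hl; rewrite inE Hi' orbT.
by apply: Hl; rewrite inE eqxx.
Qed.

Lemma gamma_out c l N j0 m : (m <= N)%N ->
  (forall k', k' \in l -> forall i, i \in iota 1 (nk c k') ->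
     ((idx c k' i < j0) || (j0 + N <= idx c k' i))%N) ->
  foldl (fun g k' => gammak c k' g) (Ts j0 (St N m)) l = Ts j0 (St N m).
Proof.
move=> HmN; elim: l => [|k' l IH] //= Hl.
rewrite /gammak fold_out //; first by apply: IH => k'' Hk''; apply: Hl; rewrite inE Hk'' orbT.
by apply: Hl; rewrite inE eqxx.
Qed.

Lemma c_mono s c : (forall k, (1 <= k <= s)%N -> (c k < c k.+1)%N) ->
  forall a b, (1 <= a)%N -> (a <= b)%N -> (b <= s.+1)%N -> (c a <= c b)%N.
Proof.
move=> hinc a b Ha; elim: b => [|b IH] Hab Hb; first by lia.
case: (ltngtP a b.+1) => H; [|by lia|by rewrite H].
have := hinc b; have := IH; lia.
Qed.

Lemma gamma_Ts s c : (forall k, (1 <= k <= s)%N -> (c k < c k.+1)%N) ->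
  forall k, (1 <= k <= s)%N ->
  gamma c s (Ts (c k) (St (nk c k) 0)) = Ts (c k) (St (nk c k) (nk c k)).
Proof.
move=> hinc k Hk.
have Hmono := c_mono hinc.
rewrite /gamma.
have -> : iota 1 s = iota 1 (k.-1) ++ k :: iota k.+1 (s - k).
  have -> : s = (k.-1 + (s - k).+1)%N by lia.
  rewrite iotaD; congr (_ ++ _); have -> : (1 + k.-1 = k)%N by lia.
  by have -> : (k.-1 + (s - k).+1 - k = s - k)%N by lia.
rewrite foldl_cat gamma_out //; last first.
  move=> k' Hk' i Hi; rewrite mem_iota in Hk'; rewrite mem_iota in Hi.
  have := Hmono k'.+1 k; have := hinc k'; rewrite /idx /nk in Hi *; lia.
rewrite /= gammak_block gamma_out //.
move=> k' Hk' i Hi; rewrite mem_iota in Hk'; rewrite mem_iota in Hi.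
have := Hmono k.+1 k'; have := hinc k; rewrite /idx /nk in Hi *; lia.
Qed.

Lemma AA_E j : AA K j = [:: (1, Path (X j) [:: r_ j; l_ j])].
Proof. by rewrite /AA /arr /fmul /= /pend /= eqxx /= mulr1. Qed.

Lemma G_E j b : (if b then AA K j else arr K (a_ j)) = [:: (1, Path (X j) (word j [:: b]))].
Proof. by case: b; rewrite ?AA_E /= ?cats0. Qed.

Lemma pend_word j0 bs : pend (Path (X j0) (word j0 bs)) = X (j0 + size bs).
Proof.
elim: bs j0 => [|b bs IH] j0 /=; first by rewrite addn0.
rewrite pend_cat; case: b.
  by have -> : pend (Path (X j0) [:: r_ j0; l_ j0]) = X j0.+1 by []; rewrite IH addSnnS.
by have -> : pend (Path (X j0) [:: a_ j0]) = X j0.+1 by []; rewrite IH addSnnS.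
Qed.

Lemma fmul_G v w j b : pend (Path v w) = X j ->
  fmul [:: (1, Path v w)] (if b then AA K j else arr K (a_ j)) = [:: (1, Path v (w ++ word j [:: b]))].
Proof. by move=> Hp; rewrite G_E /fmul /= Hp eqxx /= mulr1. Qed.

Lemma foldl_G v j0 f r : forall m w, (1 <= m)%N -> pend (Path v w) = X (j0 + m - 1) ->
  foldl (@fmul K) [:: (1, Path v w)]
    [seq (if f i then AA K (j0 + i - 1) else arr K (a_ (j0 + i - 1))) | i <- iota m r]
  = [:: (1, Path v (w ++ word (j0 + m - 1) [seq f i | i <- iota m r]))].
Proof.
elim: r => [|r IH] m w Hm Hp /=; first by rewrite cats0.
rewrite fmul_G // IH //; last first.
  by rewrite pend_cat Hp pend_word /=; congr X; lia.
rewrite -catA; congr [:: (_, Path _ (_ ++ _))]; rewrite /= cats0.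
by have -> : (j0 + m.+1 - 1 = (j0 + m - 1).+1)%N by lia.
Qed.

Lemma fprod_word j0 N f : (0 < N)%N ->
  Defs.fprod [seq (if f i then AA K (j0 + i - 1) else arr K (a_ (j0 + i - 1))) | i <- iota 1 N]
  = [:: (1, Path (X j0) (word j0 [seq f i | i <- iota 1 N]))].
Proof.
case: N => [|N] // _ /=.
rewrite addnK G_E foldl_G //; last by rewrite pend_word /=; congr X; lia.
by rewrite /= cats0; have -> : (j0 + 2 - 1 = j0.+1)%N by lia.
Qed.

Lemma map_constE (T : Type) (b : bool) (s : seq T) : [seq b | _ <- s] = nseq (size s) b.
Proof. by elim: s => //= x s ->. Qed.

Lemma apath_Ts c k : (0 < nk c k)%N -> apath K c k = Ts (c k) [:: nseq (nk c k) false].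
Proof.
move=> HN; rewrite /apath /idx.
rewrite (fprod_word (c k) (fun _ => false) HN).
by rewrite !map_constE size_iota.
Qed.

Lemma Apath_Ts c k : (0 < nk c k)%N -> Apath K c k = Ts (c k) [:: nseq (nk c k) true].
Proof.
move=> HN; rewrite /Apath /idx.
rewrite (fprod_word (c k) (fun _ => true) HN).
by rewrite !map_constE size_iota.
Qed.

Lemma W_Ts c k : (0 < nk c k)%N -> W K c k = Ts (c k) (St (nk c k) 0).
Proof. by move=> HN; rewrite /W apath_Ts // Apath_Ts // /St /= subn0. Qed.

Definition U N := [seq [seq (j == i) | j <- iota 1 N] | i <- iota 1 N].

Lemma singles_Ts c k : (0 < nk c k)%N -> single_terms K c k = Ts (c k) (U (nk c k)).
Proof.
move=> HN; rewrite /single_terms /idx.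
have E1 := fun i => @fprod_word (c k) (nk c k) (fun j => j == i) HN.
rewrite (eq_map E1) flatten_map1 /Ts /U -map_comp.
by [].
Qed.

Lemma pairs_perm (T : eqType) (g1 g2 : seq bool -> T) L :
  perm_eq (flatten [seq [:: g1 b; g2 b] | b <- L]) (map g1 L ++ map g2 L).
Proof.
elim: L => [|b L IH] //=.
rewrite perm_cons perm_sym -cat1s perm_catCA /= perm_cons perm_sym //.
Qed.

Lemma count_rcons b x : count id (rcons b x) = (count id b + x)%N.
Proof. by rewrite -cats1 count_cat /= addn0. Qed.

Lemma nseq_rcons m (x : bool) : nseq m.+1 x = rcons (nseq m x) x.
Proof. by elim: m => //= m <-. Qed.

Lemma filter_allbits_split P m :
  perm_eq (filter P (allbits m.+1))
    (map (rcons^~ false) (filter (preim (rcons^~ false) P) (allbits m)) ++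
     map (rcons^~ true) (filter (preim (rcons^~ true) P) (allbits m))).
Proof.
rewrite /= -!filter_map -filter_cat; apply: perm_filter; exact: pairs_perm.
Qed.

Lemma filter0 m : perm_eq (filter (fun b => count id b == 0)%N (allbits m)) [:: nseq m false].
Proof.
elim: m => [|m IH] //.
apply: perm_trans (filter_allbits_split _ _) _.
rewrite (@eq_filter _ (preim (rcons^~ true) _) pred0); last first.
  by move=> b /=; rewrite count_rcons addn1.
rewrite filter_pred0 cats0.
rewrite (@eq_filter _ (preim (rcons^~ false) _) (fun b => count id b == 0)%N); last first.
  by move=> b /=; rewrite count_rcons addn0.
by rewrite nseq_rcons; apply: (perm_map _ IH).
Qed.

Lemma U_S N : U N.+1 = map (rcons^~ false) (U N) ++ [:: rcons (nseq N false) true].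
Proof.
rewrite /U -[N.+1]addn1 iotaD map_cat /= add1n; congr (_ ++ _).
  rewrite -[RHS]map_comp; apply: (iffLR (eq_in_map _ _ _)) => i; rewrite mem_iota => /andP [H1 H2] /=.
  rewrite map_cat /= -cats1; congr (_ ++ [:: _]).
  by apply/negbTE; rewrite neq_ltn; move: H2; rewrite add1n ltnS => ->; rewrite orbT.
rewrite map_cat /= eqxx -cats1; congr ([:: _ ++ [:: _]]).
rewrite (_ : nseq N false = [seq false | _ <- iota 1 N]); last by rewrite map_constE size_iota.
apply: (iffLR (eq_in_map _ _ _)) => j; rewrite mem_iota add1n.
by case/andP => _ H; apply/negbTE; rewrite neq_ltn H.
Qed.

Lemma filter1 m : perm_eq (filter (fun b => count id b <= 1)%N (allbits m)) (nseq m false :: U m).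
Proof.
elim: m => [|m IH] //.
apply: perm_trans (filter_allbits_split _ _) _.
rewrite (@eq_filter _ (preim (rcons^~ true) _) (fun b => count id b == 0)%N); last first.
  by move=> b /=; rewrite count_rcons addn1 ltnS leqn0.
rewrite (@eq_filter _ (preim (rcons^~ false) _) (fun b => count id b <= 1)%N); last first.
  by move=> b /=; rewrite count_rcons addn0.
rewrite U_S nseq_rcons -cat1s catA.
apply: perm_cat; last by apply: (perm_map _ (filter0 m)).
by rewrite cat1s; apply: (perm_map _ IH).
Qed.

Lemma two_true b : (1 < count id b)%N ->
  exists q1 q2, [/\ (q1 < q2)%N, (q2 < size b)%N, nth false b q1 & nth false b q2].
Proof.
elim: b => [|x b IH] //=.
case: x => /=.
  rewrite add1n ltnS -has_count => /hasP [y Hy /= Hyt].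
  move: Hy; rewrite Hyt => /(nthP false) [q Hq Hnth].
  by exists 0%N, q.+1; split => //; rewrite Hnth.
rewrite add0n => /IH [q1 [q2 [H1 H2 H3 H4]]].
by exists q1.+1, q2.+1.
Qed.

Lemma has_factor_word c k b q : (q < size b)%N -> nth false b q ->
  has_factor c k q.+1 (Path (X (c k)) (word (c k) b)).
Proof.
move=> Hq Hn; rewrite /has_factor /=.
have -> : idx c k q.+1 = (c k + q)%N by rewrite /idx addnS subn1.
rewrite -(cat_take_drop q b) (drop_nth false Hq) Hn word_cat size_take Hq /=.
exact: infix_infix.
Qed.

Lemma coef_perm (f g : fsum K) : perm_eq f g -> coef f =1 coef g.
Proof. by move=> H p; rewrite /coef; apply: perm_big. Qed.

End Sec.

Theorem mainTheorem6 (K : fieldType) (n s : nat) (c : nat -> nat)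
    (hn : (1 <= n)%N)
    (hc1 : c 1%N = 1%N) (hcs : c s.+1 = n.+1)
    (hinc : forall k : nat, (1 <= k <= s)%N -> (c k < c k.+1)%N)
    (hgap : forall k : nat, (1 <= k <= s)%N -> (2 <= nk c k)%N) :
  forall k : nat, (1 <= k <= s)%N ->
    exists Gamma : fsum K,
      (forall t, t \in Gamma -> two_factors c k t.2) /\
      coef (gamma c s (W K c k)) =1
        coef (apath K c k ++ single_terms K c k ++ Gamma).
Proof.
move=> k Hk.
have HN := hgap k Hk.
have HN0 : (0 < nk c k)%N by apply: leq_trans HN.
rewrite (W_Ts K HN0) (gamma_Ts K hinc Hk).
exists (Ts K (c k) (filter (fun b => 1 < count id b)%N (St (nk c k) (nk c k)))).
split.
  move=> t /mapP [b Hb ->] /=; rewrite mem_filter in Hb.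
  case/andP: Hb => Hc Hb.
  have Hs := size_St (leqnn _) Hb.
  have [q1 [q2 [H1 H2 H3 H4]]] := two_true Hc.
  exists q1.+1, q2.+1; split => //.
  - by rewrite -Hs.
  - by apply: has_factor_word => //; apply: ltn_trans H2.
  - by apply: has_factor_word.
apply: coef_perm.
rewrite (apath_Ts K HN0) (singles_Ts K HN0) /Ts -!map_cat; apply: perm_map.
set P := (fun b : seq bool => 1 < count id b)%N.
apply: (@perm_trans _ (filter P (St (nk c k) (nk c k)) ++ filter (predC P) (St (nk c k) (nk c k)))).
  by rewrite perm_sym perm_filterC.
rewrite perm_catC catA; apply: perm_cat => //.
rewrite /St subnn filter_cat /= /P count_nseq /= mul1n.
rewrite HN /=.
rewrite cats0 (eq_map (@cats0 _)) map_id.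
rewrite (@eq_filter _ _ (fun b => count id b <= 1)%N); last by move=> b /=; rewrite -leqNgt.
exact: filter1.
Qed.
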